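(* Let $f:\mathbb{N}\to\mathbb{R}$ with $f(1)=1$ be multiplicative (i.e. $f(mn)=f(m)f(n)$ for coprime $m,n$). Assume there exist $C>0$ and $\gamma\in\mathbb{R}$ such that $|f(n)|\leq C n^\gamma$ for all $n\geq 2$. Then $|f^{-1}(n)| \leq n^{\gamma+\frac{\ln(1+C)}{\ln 2}}$ for all $n\geq2$.
   Context: $f^{-1}$ denotes the Dirichlet inverse of $f$: the arithmetic function with $\sum_{d\mid n} f(n/d) f^{-1}(d)=\varepsilon(n)$ for all $n$, where $\varepsilon(1)=1$ and $\varepsilon(n)=0$ for $n\ge2$. *)

(* Defs.v *)
From HB Require Import structures.
From mathcomp Require Import all_boot all_order all_algebra.
From mathcomp Require Import reals exp.
Set Implicit Arguments. Unset Strict Implicit. Unset Printing Implicit Defensive.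
Import Order.TTheory GRing.Theory Num.Theory.
Local Open Scope ring_scope.

(* Arithmetic functions are f : nat -> R; only positive arguments matter. *)

Definition arith_multiplicative (R : realType) (f : nat -> R) : Prop :=
  f 1%N = 1 /\
  forall m n : nat, (0 < m)%N -> (0 < n)%N -> coprime m n ->
    f (m * n)%N = f m * f n.

Definition dconv (R : realType) (f g : nat -> R) (n : nat) : R :=
  \sum_(d <- divisors n) f (n %/ d)%N * g d.

Definition is_dirichlet_inverse (R : realType) (f g : nat -> R) : Prop :=
  forall n : nat, (0 < n)%N -> dconv f g n = (n == 1%N)%:R.

(* Main.v *)
Require Import Defs.
From HB Require Import structures.
From mathcomp Require Import all_boot all_order all_algebra.
From mathcomp Require Import reals exp.
From mathcomp Require Import zify ring lra.
Import Order.TTheory GRing.Theory Num.Theory.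
Local Open Scope nat_scope.

Lemma dvd_gcd_prod d m k : d %| m * k -> d %| gcdn d m * gcdn d k.
Proof.
move=> h; rewrite muln_gcdl !muln_gcdr !dvdn_gcd.
by rewrite h (dvdn_mull m (dvdnn d)) !(dvdn_mulr _ (dvdnn d)).
Qed.

Lemma divisors_mulP m k : (0 < m)%N -> (0 < k)%N -> coprime m k ->
  perm_eq (divisors (m * k)) [seq (d1 * d2)%N | d1 <- divisors m, d2 <- divisors k].
Proof.
move=> m0 k0 cmk.
have mk0 : (0 < m * k)%N by rewrite muln_gt0 m0.
apply: uniq_perm; first exact: divisors_uniq.
  apply: allpairs_uniq; try exact: divisors_uniq.
  move=> [a1 a2] [b1 b2] /allpairsP[[x1 x2] /= [hx1 hx2 [-> ->]]].
  move=> /allpairsP[[y1 y2] /= [hy1 hy2 [-> ->]]] /= e.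
  rewrite -!dvdn_divisors // in hx1 hx2 hy1 hy2.
  have c12 : coprime x1 y2 by apply: coprime_dvdl hx1 (coprime_dvdr hy2 cmk).
  have c21 : coprime y1 x2 by apply: coprime_dvdl hy1 (coprime_dvdr hx2 cmk).
  have e1 : x1 = y1.
    apply/eqP; rewrite eqn_dvd.
    rewrite -(Gauss_dvdl _ c12) -e dvdn_mulr //=.
    by rewrite -(Gauss_dvdl _ c21) e dvdn_mulr.
  subst y1.
  have x10 : (0 < x1)%N by apply: dvdn_gt0 m0 hx1.
  by move/eqP: e; rewrite eqn_pmul2l // => /eqP ->.
move=> d; rewrite -dvdn_divisors //; apply/idP/allpairsP.
  move=> hd; exists (gcdn d m, gcdn d k) => /=.
  rewrite -!dvdn_divisors // dvdn_gcdr dvdn_gcdr; split=> //.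
  have cc : coprime (gcdn d m) (gcdn d k).
    exact: coprime_dvdl (dvdn_gcdr d m) (coprime_dvdr (dvdn_gcdr d k) cmk).
  by apply/eqP; rewrite eqn_dvd dvd_gcd_prod //= Gauss_dvd // !dvdn_gcdl.
move=> [[x1 x2] /= [hx1 hx2 ->]]; rewrite -!dvdn_divisors // in hx1 hx2.
exact: dvdn_mul.
Qed.

Lemma divisors_pfactorP p a : prime p ->
  perm_eq (divisors (p ^ a)) [seq p ^ i | i <- iota 0 a.+1].
Proof.
move=> pp; have p1 := prime_gt1 pp.
have pa0 : 0 < p ^ a by rewrite expn_gt0 ltnW.
apply: uniq_perm; first exact: divisors_uniq.
  rewrite map_inj_in_uniq ?iota_uniq // => i j _ _ /eqP.
  by rewrite eqn_exp2l // => /eqP.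
move=> d; rewrite -dvdn_divisors //; apply/dvdn_pfactor/mapP => //.
  by move=> [i hi ->]; exists i => //; rewrite mem_iota.
by move=> [i]; rewrite mem_iota => /andP[_ hi] ->; exists i.
Qed.

Local Open Scope ring_scope.

Lemma sum_divisors_mul (R : realType) (F : nat -> R) m k :
  (0 < m)%N -> (0 < k)%N -> coprime m k ->
  \sum_(d <- divisors (m * k)) F d =
  \sum_(d1 <- divisors m) \sum_(d2 <- divisors k) F (d1 * d2)%N.
Proof.
move=> m0 k0 cmk.
by rewrite (perm_big _ (@divisors_mulP m k m0 k0 cmk)) big_allpairs_dep.
Qed.

Lemma sum_divisors_pfactor (R : realType) (F : nat -> R) p a : prime p ->
  \sum_(d <- divisors (p ^ a)) F d = \sum_(i < a.+1) F (p ^ i)%N.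
Proof.
move=> pp; rewrite (perm_big _ (divisors_pfactorP p a pp)) big_map.
have -> : iota 0 a.+1 = index_iota 0 a.+1 by rewrite /index_iota subn0.
by rewrite big_mkord.
Qed.

Lemma sum_eq1 (R : realType) (s : seq nat) x : uniq s -> x \in s ->
  \sum_(y <- s) ((y == x)%:R : R) = 1.
Proof.
move=> us xs; rewrite (big_rem x) //= eqxx big1_seq ?addr0 // => y /andP[_ hy].
move: hy; rewrite mem_rem_uniq // => /andP[/= hyx _].
by rewrite (negbTE hyx).
Qed.

Lemma inv1 (R : realType) (f g : nat -> R) :
  arith_multiplicative f -> is_dirichlet_inverse f g -> g 1%N = 1.
Proof.
move=> [f1 _] hg; have := hg 1%N isT.
by rewrite /dconv /= big_cons big_nil divn1 f1 mul1r addr0.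
Qed.

Lemma inv_mult (R : realType) (f g : nat -> R) :
  arith_multiplicative f -> is_dirichlet_inverse f g ->
  forall N m k, (m * k <= N)%N -> (0 < m)%N -> (0 < k)%N -> coprime m k ->
  g (m * k)%N = g m * g k.
Proof.
move=> hf hg; have g1 := @inv1 R f g hf hg; have [f1 fM] := hf.
elim=> [|N IH] m k hN m0 k0 cmk.
  by move: hN; rewrite leqn0 muln_eq0 (gtn_eqF m0) (gtn_eqF k0).
have [->|m1] := eqVneq m 1%N; first by rewrite mul1n g1 mul1r.
have [->|k1] := eqVneq k 1%N; first by rewrite muln1 g1 mulr1.
have mk0 : (0 < m * k)%N by rewrite muln_gt0 m0.
have Emk := hg _ mk0; have Em := hg _ m0; have Ek := hg _ k0.
have mk1 : (m * k != 1)%N by rewrite muln_eq1 negb_and m1.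
rewrite /dconv (negbTE mk1) (negbTE m1) in Emk Em.
rewrite /dconv (negbTE k1) in Ek.
rewrite sum_divisors_mul // in Emk.
have E2 : \sum_(d1 <- divisors m) \sum_(d2 <- divisors k)
    (f (m %/ d1)%N * g d1) * (f (k %/ d2)%N * g d2) = 0.
  under eq_bigr do rewrite -big_distrr /=.
  by rewrite -big_distrl /= Em mul0r.
have : \sum_(d1 <- divisors m) \sum_(d2 <- divisors k)
    (f ((m * k) %/ (d1 * d2))%N * g (d1 * d2)%N
     - (f (m %/ d1)%N * g d1) * (f (k %/ d2)%N * g d2)) = 0.
  rewrite (eq_bigr (fun d1 => \sum_(d2 <- divisors k) f ((m * k) %/ (d1 * d2))%N * g (d1 * d2)%N
     - \sum_(d2 <- divisors k) f (m %/ d1)%N * g d1 * (f (k %/ d2)%N * g d2))); last first.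
    by move=> d1 _; rewrite sumrB.
  by rewrite sumrB Emk E2 subr0.
rewrite (eq_big_seq (fun d1 => \sum_(d2 <- divisors k)
    ((d1 == m)%:R * ((d2 == k)%:R * (g (m * k)%N - g m * g k))))).
  have s1 : \sum_(d2 <- divisors k) ((d2 == k)%:R : R) = 1.
    by rewrite sum_eq1 ?divisors_uniq ?divisors_id.
  have s2 : \sum_(d2 <- divisors m) ((d2 == m)%:R : R) = 1.
    by rewrite sum_eq1 ?divisors_uniq ?divisors_id.
  under eq_bigr do rewrite -big_distrr -big_distrl /= s1 mul1r.
  rewrite -big_distrl /= s2 mul1r.
  by move/eqP; rewrite subr_eq0 => /eqP.
move=> d1 hd1; apply: eq_big_seq => d2 hd2.
rewrite -dvdn_divisors // in hd1; rewrite -dvdn_divisors // in hd2.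
have d10 : (0 < d1)%N by apply: dvdn_gt0 m0 hd1.
have d20 : (0 < d2)%N by apply: dvdn_gt0 k0 hd2.
case: (boolP ((d1 == m) && (d2 == k))) => [/andP[/eqP e1 /eqP e2] | hne].
  by subst d1 d2; rewrite !divnn m0 k0 mk0 f1 !eqxx !mul1r.
have hlt : (d1 * d2 < m * k)%N.
  have l1 : (d1 <= m)%N by rewrite dvdn_leq.
  have l2 : (d2 <= k)%N by rewrite dvdn_leq.
  move: hne; rewrite negb_and => hne.
  case/orP: hne => hne.
    have l1' : (d1 < m)%N by rewrite ltn_neqAle hne l1.
    apply: (@leq_trans (m * d2)%N); first by rewrite ltn_pmul2r.
    by rewrite leq_pmul2l.
  have l2' : (d2 < k)%N by rewrite ltn_neqAle hne l2.
  apply: (@leq_trans (d1 * k)%N); first by rewrite ltn_pmul2l.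
  by rewrite leq_pmul2r.
have -> : ((d1 == m)%:R * ((d2 == k)%:R * (g (m * k)%N - g m * g k)) : R) = 0.
  by move: hne; rewrite negb_and => /orP[] /negbTE ->; rewrite ?mul0r ?mulr0.
have cd : coprime d1 d2.
  exact: coprime_dvdl hd1 (coprime_dvdr hd2 cmk).
have q1 : (m %/ d1 %| m)%N by rewrite -{2}(divnK hd1) dvdn_mulr.
have q2 : (k %/ d2 %| k)%N by rewrite -{2}(divnK hd2) dvdn_mulr.
have cq : coprime (m %/ d1) (k %/ d2).
  exact: coprime_dvdl q1 (coprime_dvdr q2 cmk).
have em : (m * k = (m %/ d1 * (k %/ d2)) * (d1 * d2))%N.
  by rewrite mulnACA !divnK.
rewrite em mulnK ?muln_gt0 ?d10 //.
rewrite fM ?divn_gt0 //; try by rewrite dvdn_leq.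
rewrite IH ?muln_gt0 ?d10 //; last by rewrite -ltnS (leq_trans hlt).
by rewrite mulrACA subrr.
Qed.

Lemma geom (R : realType) (C : R) a :
  C * \sum_(i < a) (1 + C) ^+ i = (1 + C) ^+ a - 1.
Proof.
elim: a => [|a IH]; first by rewrite big_ord0 mulr0 expr0 subrr.
rewrite big_ord_recr /= mulrDr IH exprSr; ring.
Qed.

Lemma ppow_bound (R : realType) (f g : nat -> R) (C gamma : R) :
  arith_multiplicative f -> is_dirichlet_inverse f g -> 0 < C ->
  (forall n : nat, (2 <= n)%N -> `|f n| <= C * (n%:R `^ gamma)) ->
  forall p a, prime p ->
  `|g (p ^ a)%N| <= (1 + C) ^+ a * ((p ^ a)%N%:R `^ gamma).
Proof.
move=> hf hg C0 hfb p a pp.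
have g1 := @inv1 R f g hf hg; have [f1 fM] := hf.
have p1 := prime_gt1 pp; have p0 := ltnW p1.
elim/ltn_ind: a => a IH.
case: a IH => [|a] IH.
  by rewrite expn0 g1 normr1 expr0 mul1r powR1.
have pa0 : (0 < p ^ a.+1)%N by rewrite expn_gt0 p0.
have E := hg _ pa0.
have ne : (p ^ a.+1 == 1)%N = false by rewrite -[X in (_ == X)%N](expn0 p) eqn_exp2l.
rewrite /dconv ne sum_divisors_pfactor // big_ord_recr /= divnn pa0 f1 mul1r in E.
move/eqP: E; rewrite addrC addr_eq0 => /eqP ->; rewrite normrN.
set P := ((p ^ a.+1)%N%:R : R) `^ gamma.
apply: (le_trans (ler_norm_sum _ _ _)).
apply: (@le_trans _ _ (\sum_(i < a.+1) (C * (1 + C) ^+ i) * P)).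
  apply: ler_sum => i _; rewrite normrM.
  have ia : (i <= a.+1)%N by apply: ltnW.
  have key : ((p ^ (a.+1 - i))%N%:R `^ gamma) * ((p ^ i)%N%:R `^ gamma) = P.
    by rewrite -powRM ?ler0n // -natrM -expnD subnK.
  rewrite -key mulrACA; apply: ler_pM => //.
  - rewrite -expnB //; apply: hfb.
    apply: leq_trans p1 _.
    by rewrite -[X in (X <= _)%N](expn1 p) leq_pexp2l // subn_gt0.
  - exact: IH.
rewrite -big_distrl /= -mulr_sumr geom; apply: ler_wpM2r; first exact: powR_ge0.
by rewrite lerBlDr lerDl.
Qed.

Lemma pow_cmp (R : realType) (C : R) p a : 0 < C -> (2 <= p)%N ->
  (1 + C) ^+ a <= ((p ^ a)%N%:R : R) `^ (ln (1 + C) / ln 2).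
Proof.
move=> C0 p2.
have l2 : 0 < ln (2 : R) by apply: ln_gt0; rewrite ltr1n.
have lC : 0 < ln (1 + C) by apply: ln_gt0; rewrite ltrDl.
have X0 : ((p ^ a)%N%:R : R) != 0 by rewrite pnatr_eq0 -lt0n expn_gt0 (leq_trans _ p2).
rewrite /powR (negbTE X0) natrX lnXn ?ltr0n ?(leq_trans _ p2) //.
rewrite -[(1 + C) ^+ a]lnK ?posrE ?exprn_gt0 ?addr_gt0 //.
rewrite [ln ((1 + C) ^+ a)]lnXn; last by rewrite addr_gt0.
rewrite ler_expR -[ln (1 + C) *+ a]mulr_natr -[ln p%:R *+ a]mulr_natr mulrA.
apply: ler_wpM2r; first exact: ler0n.
have lp : ln (2 : R) <= ln p%:R.
  by rewrite ler_ln ?posrE ?ltr0n ?(leq_trans _ p2) // ler_nat.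
rewrite -{1}(divfK (lt0r_neq0 l2) (ln (1 + C))) [X in X <= _]mulrC [X in _ <= X]mulrC.
apply: ler_wpM2r => //; exact: ltW (divr_gt0 lC l2).
Qed.

Local Open Scope ring_scope.

Theorem corollary3p3 (R : realType) (f finv : nat -> R) (C gamma : R) :
  arith_multiplicative f ->
  is_dirichlet_inverse f finv ->
  0 < C ->
  (forall n : nat, (2 <= n)%N -> `|f n| <= C * (n%:R `^ gamma)) ->
  forall n : nat, (2 <= n)%N ->
    `|finv n| <= n%:R `^ (gamma + ln (1 + C) / ln 2).
Proof.
move=> hf hg C0 hfb.
set e := gamma + ln (1 + C) / ln 2.
have g1 := @inv1 R f finv hf hg.
have ppb : forall p a, prime p -> `|finv (p ^ a)%N| <= (p ^ a)%N%:R `^ e.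
  move=> p a pp.
  have X0 : ((p ^ a)%N%:R : R) != 0 by rewrite pnatr_eq0 -lt0n expn_gt0 prime_gt0.
  rewrite /e powRD ?X0 ?implybT // mulrC.
  apply: (le_trans (@ppow_bound R f finv C gamma hf hg C0 hfb p a pp)).
  apply: ler_wpM2r; first exact: powR_ge0.
  exact: (@pow_cmp R C p a C0 (prime_gt1 pp)).
suff H : forall n, (0 < n)%N -> `|finv n| <= n%:R `^ e.
  by move=> n n2; apply: H; apply: ltnW.
elim/ltn_ind => n IH n0.
have [->|n1] := eqVneq n 1%N; first by rewrite g1 normr1 powR1.
have n2 : (1 < n)%N by rewrite ltn_neqAle eq_sym n1 n0.
have pp := pdiv_prime n2; set p := pdiv n in pp.
have [m cpm En] := pfactor_coprime pp n0.
set a := logn p n in En.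
have a0 : (0 < a)%N by rewrite logn_gt0 mem_primes pp n0 pdiv_dvd.
have pa1 : (1 < p ^ a)%N by rewrite -[X in (X < _)%N](expn0 p) ltn_exp2l // prime_gt1.
have m0 : (0 < m)%N by move: n0; rewrite En muln_gt0 => /andP[].
have mn : (m < n)%N by rewrite En ltn_Pmulr.
have cmp : coprime m (p ^ a) by rewrite coprime_sym coprimeXl.
rewrite En (@inv_mult R f finv hf hg (m * p ^ a) m (p ^ a)) ?expn_gt0 ?(prime_gt0 pp) //.
rewrite normrM natrM powRM ?ler0n //.
apply: ler_pM => //.
  by apply: IH.
exact: ppb.
Qed.
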